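(* Let $\ell\ge 6$ and $w\ge 0$ be integers, let $A=\langle A_1,\dots,A_\ell\rangle$ and $B=\langle B_1,\dots,B_\ell\rangle$ be real sequences, and let $\delta:\mathbb{R}\times\mathbb{R}\to[0,\infty)$ be a symmetric pairwise cost function with $\delta(a,a)=0$ for all $a$. Suppose that for all reals $a,b,x,y$ with $a\le x\le y\le b$ or $a\ge x\ge y\ge b$ we have $\delta(a,b)\ge \delta(a,y)+\delta(b,x)-\delta(x,y)$. Define $$\mathrm{LB\_Petitjean}_w(A,B)=\mathrm{minlrpaths}(A,B)+\sum_{i=4}^{\ell-3} \kappa_i+\sum_{j=4}^{\ell-3}\beta_j,$$ where $\kappa_i=\delta(A_i,\mathbb{U}^B_i)$ if $A_i>\mathbb{U}^B_i$, $\kappa_i=\delta(A_i,\mathbb{L}^B_i)$ if $A_i<\mathbb{L}^B_i$, and $\kappa_i=0$ otherwise; and $\beta_j$ is given by the first applicable case among: (1) $\delta(B_j,\mathbb{U}^A_j)-\delta(\mathbb{U}^{\Omega}_j,\mathbb{U}^A_j)$ if $B_j>\mathbb{U}^{\Omega}_j>\mathbb{U}^A_j$; (2) $\delta(B_j,\mathbb{L}^A_j)-\delta(\mathbb{L}^{\Omega}_j,\mathbb{L}^A_j)$ if $B_j<\mathbb{L}^{\Omega}_j<\mathbb{L}^A_j$; (3) $\delta(B_j,\mathbb{U}^{\Omega}_j)$ if $B_j>\mathbb{U}^{\Omega}_j$ and $\mathbb{U}^{\Omega}_j\le\mathbb{U}^A_j$; (4) $\delta(B_j,\mathbb{L}^{\Omega}_j)$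 if $B_j<\mathbb{L}^{\Omega}_j$ and $\mathbb{L}^{\Omega}_j\ge\mathbb{L}^A_j$; (5) $0$ otherwise. Then $\mathrm{LB\_Petitjean}_w(A,B)\le \mathrm{DTW}_w(A,B)$.
   Context: A warping path of $A$ and $B$ is a sequence of pairs $(i_1,j_1),\dots,(i_P,j_P)$ with $(i_1,j_1)=(1,1)$, $(i_P,j_P)=(\ell,\ell)$, and for each $1<k\le P$, $(i_{k-1},j_{k-1})\in\{(i_k-1,j_k),(i_k,j_k-1),(i_k-1,j_k-1)\}$. $\mathrm{DTW}_w(A,B)$ is the minimum of $\sum_{k=1}^P\delta(A_{i_k},B_{j_k})$ over all warping paths all of whose pairs satisfy $i_k-w\le j_k\le i_k+w$. For a real sequence $S$ of length $\ell$, its upper and lower envelopes with window $w$ are $\mathbb{U}^S_i=\max_{\max(1,i-w)\le j\le\min(\ell,i+w)}S_j$ and $\mathbb{L}^S_i=\min_{\max(1,i-w)\le j\le\min(\ell,i+w)}S_j$. The projection $\Omega=\Omega_w(A,B)$ is the sequence with $\Omega_i=\mathbb{U}^B_i$ if $A_i>\mathbb{U}^B_i$, $\Omega_i=\mathbb{L}^B_i$ if $A_i<\mathbb{L}^B_i$, and $\Omega_i=A_i$ otherwise; $\mathbb{U}^{\Omega},\mathbb{L}^{\Omega}$ are its envelopes with window $w$. Writing $\delta_{i,j}=\delta(A_i,B_j)$, $\mathrm{minlrpaths}(A,B)=\delta_{1,1}+\delta_{\ell,\ell}+\min[\delta_{1,2}+\delta_{1,3},\ \delta_{1,2}+\delta_{2,3},\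 \delta_{2,2}+\delta_{2,3},\ \delta_{2,2}+\delta_{3,3},\ \delta_{2,2}+\delta_{3,2},\ \delta_{2,1}+\delta_{3,2},\ \delta_{2,1}+\delta_{3,1}]+\min[\delta_{\ell,\ell-1}+\delta_{\ell,\ell-2},\ \delta_{\ell,\ell-1}+\delta_{\ell-1,\ell-2},\ \delta_{\ell-1,\ell-1}+\delta_{\ell-1,\ell-2},\ \delta_{\ell-1,\ell-1}+\delta_{\ell-2,\ell-2},\ \delta_{\ell-1,\ell-1}+\delta_{\ell-2,\ell-1},\ \delta_{\ell-1,\ell}+\delta_{\ell-2,\ell-1},\ \delta_{\ell-1,\ell}+\delta_{\ell-2,\ell}]$. *)

(* Defs.v *)
(* concrete reals R, plus Coquelicot's Rbar / Glb_Rbar for the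
   minimum defining DTW. Sequences are functions nat -> R used at indices 1..l. *)
From Stdlib Require Import Reals List Arith.
From Coquelicot Require Import Coquelicot.
Import ListNotations.
Open Scope R_scope.

Definition sum_range (lo hi : nat) (f : nat -> R) : R :=
  fold_right Rplus 0 (map f (seq lo (S hi - lo))).

Definition win_lo (w i : nat) : nat := Nat.max 1 (i - w).
Definition win_hi (l w i : nat) : nat := Nat.min l (i + w).

Definition upper_env (l w : nat) (X : nat -> R) (i : nat) : R :=
  let lo := win_lo w i in
  fold_right Rmax (X lo) (map X (seq lo (S (win_hi l w i) - lo))).
Definition lower_env (l w : nat) (X : nat -> R) (i : nat) : R :=
  let lo := win_lo w i in
  fold_right Rmin (X lo) (map X (seq lo (S (win_hi l w i) - lo))).

Definition proj_seq (l w : nat) (A B : nat -> R) (i : nat) : R :=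
  if Rlt_dec (upper_env l w B i) (A i) then upper_env l w B i
  else if Rlt_dec (A i) (lower_env l w B i) then lower_env l w B i
  else A i.

Definition step (p q : nat * nat) : Prop :=
  (fst q = S (fst p) /\ snd q = snd p) \/
  (fst q = fst p /\ snd q = S (snd p)) \/
  (fst q = S (fst p) /\ snd q = S (snd p)).

Fixpoint chain (p : nat * nat) (P : list (nat * nat)) : Prop :=
  match P with
  | [] => True
  | q :: P' => step p q /\ chain q P'
  end.

Definition warping_path (l : nat) (P : list (nat * nat)) : Prop :=
  match P with
  | [] => False
  | p :: P' => p = (1%nat, 1%nat) /\ last P p = (l, l) /\ chain p P'
  end.

Definition in_window (w : nat) (P : list (nat * nat)) : Prop :=
  List.Forall (fun p => (fst p <= snd p + w)%nat /\ (snd p <= fst p + w)%nat) P.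

Definition path_cost (delta : R -> R -> R) (A B : nat -> R)
  (P : list (nat * nat)) : R :=
  fold_right Rplus 0 (map (fun p => delta (A (fst p)) (B (snd p))) P).

Definition DTW (l w : nat) (delta : R -> R -> R) (A B : nat -> R) : Rbar :=
  Glb_Rbar (fun c => exists P, warping_path l P /\ in_window w P /\
                               c = path_cost delta A B P).

Definition dcost (delta : R -> R -> R) (A B : nat -> R) (i j : nat) : R :=
  delta (A i) (B j).
Arguments dcost delta A B (i j)%_nat.

Definition minlrpaths (l : nat) (delta : R -> R -> R) (A B : nat -> R) : R :=
  dcost delta A B 1 1 + dcost delta A B l l
  + Rmin (dcost delta A B 1 2 + dcost delta A B 1 3) (Rmin (dcost delta A B 1 2 + dcost delta A B 2 3) (Rmin (dcost delta A B 2 2 + dcost delta A B 2 3)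
      (Rmin (dcost delta A B 2 2 + dcost delta A B 3 3) (Rmin (dcost delta A B 2 2 + dcost delta A B 3 2)
      (Rmin (dcost delta A B 2 1 + dcost delta A B 3 2) (dcost delta A B 2 1 + dcost delta A B 3 1))))))
  + Rmin (dcost delta A B l (l-1) + dcost delta A B l (l-2)) (Rmin (dcost delta A B l (l-1) + dcost delta A B (l-1) (l-2))
      (Rmin (dcost delta A B (l-1) (l-1) + dcost delta A B (l-1) (l-2))
      (Rmin (dcost delta A B (l-1) (l-1) + dcost delta A B (l-2) (l-2))
      (Rmin (dcost delta A B (l-1) (l-1) + dcost delta A B (l-2) (l-1))
      (Rmin (dcost delta A B (l-1) l + dcost delta A B (l-2) (l-1)) (dcost delta A B (l-1) l + dcost delta A B (l-2) l)))))).

Definition kappa (l w : nat) (delta : R -> R -> R) (A B : nat -> R) (i : nat) : R :=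
  if Rlt_dec (upper_env l w B i) (A i) then delta (A i) (upper_env l w B i)
  else if Rlt_dec (A i) (lower_env l w B i) then delta (A i) (lower_env l w B i)
  else 0.

Definition beta (l w : nat) (delta : R -> R -> R) (A B : nat -> R) (j : nat) : R :=
  let Om := proj_seq l w A B in
  let UO := upper_env l w Om j in
  let LO := lower_env l w Om j in
  let UA := upper_env l w A j in
  let LA := lower_env l w A j in
  if Rlt_dec UO (B j) then
    if Rlt_dec UA UO then delta (B j) UA - delta UO UA
    else delta (B j) UO
  else if Rlt_dec (B j) LO then
    if Rlt_dec LO LA then delta (B j) LA - delta LO LA
    else delta (B j) LO
  else 0.

Definition LB_Petitjean (l w : nat) (delta : R -> R -> R) (A B : nat -> R) : R :=
  minlrpaths l delta A B
  + sum_range 4 (l - 3) (kappa l w delta A B)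
  + sum_range 4 (l - 3) (beta l w delta A B).

(* Main.v *)
Require Import Defs.
From Stdlib Require Import Reals List Arith Lia Lra.
From Coquelicot Require Import Coquelicot.
Import ListNotations.
Open Scope R_scope.

Fixpoint Sm (n : nat) (f : nat -> R) : R :=
  match n with O => 0 | S n' => Sm n' f + f n' end.

Lemma Sm_S n f : Sm (S n) f = Sm n f + f n.
Proof. reflexivity. Qed.

Lemma Sm_shift n f : Sm (S n) f = f O + Sm n (fun k => f (S k)).
Proof. induction n. simpl. lra. rewrite Sm_S, IHn, (Sm_S n). lra. Qed.

Lemma Sm_ext n f g : (forall k, (k < n)%nat -> f k = g k) -> Sm n f = Sm n g.
Proof. induction n; intros H; simpl; auto. rewrite IHn, H; auto. Qed.

Lemma Sm_le n f g : (forall k, (k < n)%nat -> f k <= g k) -> Sm n f <= Sm n g.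
Proof. induction n; intros H; simpl. lra. pose proof (IHn (fun k Hk => H k (Nat.lt_lt_succ_r _ _ Hk))). pose proof (H n (Nat.lt_succ_diag_r n)). lra. Qed.

Lemma Sm_plus n f g : Sm n (fun k => f k + g k) = Sm n f + Sm n g.
Proof. induction n; simpl. lra. rewrite IHn. lra. Qed.

Lemma Sm_nonneg n f : (forall k, 0 <= f k) -> 0 <= Sm n f.
Proof. intros H; induction n; simpl. lra. pose proof (H n). lra. Qed.

Lemma Sm_zero n f : (forall k, (k < n)%nat -> f k = 0) -> Sm n f = 0.
Proof. intros H. rewrite (Sm_ext n f (fun _ => 0)); auto. induction n; simpl; auto. rewrite IHn; auto. lra. Qed.

Lemma Sm_split a b f : Sm (a + b) f = Sm a f + Sm b (fun k => f (a + k)%nat).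
Proof. induction b. rewrite Nat.add_0_r. simpl. lra. rewrite Nat.add_succ_r, !Sm_S, IHb. lra. Qed.

Lemma Sm_mono_n m n f : (forall k, 0 <= f k) -> (m <= n)%nat -> Sm m f <= Sm n f.
Proof. intros H Hmn. replace n with (m + (n - m))%nat by lia. rewrite Sm_split.
  pose proof (Sm_nonneg (n-m) (fun k => f (m+k)%nat) (fun k => H _)). lra. Qed.

Lemma Sm4_head n f : (4 <= n)%nat -> (forall k, 0 <= f k) -> f 0%nat + f 1%nat + f 2%nat + f 3%nat <= Sm n f.
Proof. intros Hn H. pose proof (Sm_mono_n 4 n f H Hn). simpl in H0. lra. Qed.

Lemma Sm4_tail n f : (4 <= n)%nat -> (forall k, 0 <= f k) ->
  f (n-4)%nat + f (n-3)%nat + f (n-2)%nat + f (n-1)%nat <= Sm n f.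
Proof. intros Hn H. destruct n as [|[|[|[|m]]]]; try lia.
  rewrite !Sm_S. replace (S (S (S (S m))) - 4)%nat with m by lia.
  replace (S (S (S (S m))) - 3)%nat with (S m) by lia.
  replace (S (S (S (S m))) - 2)%nat with (S (S m)) by lia.
  replace (S (S (S (S m))) - 1)%nat with (S (S (S m))) by lia.
  pose proof (Sm_nonneg m f H). lra. Qed.

Lemma fold_seq f a n : fold_right Rplus 0 (map f (seq a n)) = Sm n (fun k => f (a + k)%nat).
Proof. revert a; induction n; intros a. simpl; auto.
  cbn [seq map fold_right]. rewrite IHn, (Sm_shift n). replace (a+0)%nat with a by lia.
  rewrite (Sm_ext n (fun k => f (S a + k)%nat) (fun k => f (a + S k)%nat)). lra.
  intros; f_equal; lia. Qed.

Lemma cost_Sm (g : nat*nat -> R) L :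
  fold_right Rplus 0 (map g L) = Sm (length L) (fun k => g (nth k L (0%nat,0%nat))).
Proof. induction L. simpl; auto. cbn [map fold_right length]. rewrite IHL, (Sm_shift (length L)). simpl. lra. Qed.

Lemma last_nth (P : list (nat*nat)) p x d : last (p::P) x = nth (length P) (p::P) d.
Proof. revert p; induction P; intros p. reflexivity. 
  change (last (a::P) x = nth (length P) (a::P) d). apply IHP. Qed.

Lemma chain_nth P p : chain p P -> forall k, (S k < length (p::P))%nat ->
  step (nth k (p::P) (0%nat,0%nat)) (nth (S k) (p::P) (0%nat,0%nat)).
Proof. revert p; induction P; intros p H k Hk; simpl in Hk. lia.
  destruct H as [H1 H2]. destruct k. simpl. auto.
  change (step (nth k (a::P) (0%nat,0%nat)) (nth (S k) (a::P) (0%nat,0%nat))).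
  apply IHP; auto. simpl; lia. Qed.

Lemma fold_max_ge L x0 y : In y L -> y <= fold_right Rmax x0 L.
Proof. induction L; simpl; intros H. contradiction. destruct H. subst. apply Rmax_l.
  eapply Rle_trans; [apply IHL; auto | apply Rmax_r]. Qed.
Lemma fold_min_le L x0 y : In y L -> fold_right Rmin x0 L <= y.
Proof. induction L; simpl; intros H. contradiction. destruct H. subst. apply Rmin_l.
  eapply Rle_trans; [apply Rmin_r | apply IHL; auto]. Qed.

Lemma upper_ge l w X i j : (win_lo w i <= j <= win_hi l w i)%nat -> X j <= upper_env l w X i.
Proof. intros H. unfold upper_env. cbv zeta. apply fold_max_ge. apply in_map. apply in_seq. lia. Qed.
Lemma lower_le l w X i j : (win_lo w i <= j <= win_hi l w i)%nat -> lower_env l w X i <= X j.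
Proof. intros H. unfold lower_env. cbv zeta. apply fold_min_le. apply in_map. apply in_seq. lia. Qed.

Lemma in_win l w i j : (1 <= j <= l)%nat -> (j <= i + w)%nat -> (i <= j + w)%nat ->
  (win_lo w i <= j <= win_hi l w i)%nat.
Proof. unfold win_lo, win_hi. lia. Qed.

Lemma cell_abs (d : R -> R -> R)
  (hnn : forall a b, 0 <= d a b)
  (hsym : forall a b, d a b = d b a)
  (hzero : forall a, d a a = 0)
  (htri : forall a b x y, (a <= x /\ x <= y /\ y <= b) \/ (a >= x /\ x >= y /\ y >= b) ->
            d a b >= d a y + d b x - d x y)
  (a b UB LB UA LA o UO LO : R) :
  b <= UB -> LB <= b -> a <= UA -> LA <= a -> o <= UO -> LO <= o ->
  o = (if Rlt_dec UB a then UB else if Rlt_dec a LB then LB else a) ->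
  let k := (if Rlt_dec UB a then d a UB else if Rlt_dec a LB then d a LB else 0) in
  let bt := (if Rlt_dec UO b then (if Rlt_dec UA UO then d b UA - d UO UA else d b UO)
             else if Rlt_dec b LO then (if Rlt_dec LO LA then d b LA - d LO LA else d b LO) else 0) in
  0 <= k /\ 0 <= bt /\ k + bt <= d a b.
Proof.
  intros h1 h2 h3 h4 h5 h6 Ho k bt. subst k bt.
  assert (M1 : forall x c y, x <= c <= y -> d x y >= d x c + d c y).
  { intros x c y Hc. pose proof (htri x y c c (or_introl (conj (proj1 Hc) (conj (Rle_refl c) (proj2 Hc))))).
    rewrite hzero, (hsym y c) in H. lra. }
  assert (H1 : forall x y p q, x <= p <= q -> q <= y -> d x y >= d x q + d y p - d p q).
  { intros x y p q Hp Hq. apply htri. left. lra. }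
  revert Ho.
  destruct (Rlt_dec UB a) as [hA|hA].
  - intros ->. pose proof (hnn a UB).
    destruct (Rlt_dec UO b) as [hU|hU]; [lra|].
    destruct (Rlt_dec b LO) as [hL|hL].
    + destruct (Rlt_dec LO LA) as [hLA|hLA].
      * pose proof (H1 b a LO LA ltac:(lra) ltac:(lra)).
        pose proof (M1 LO UB a ltac:(lra)). pose proof (M1 b LO LA ltac:(lra)).
        pose proof (hnn LO UB). pose proof (hnn b LO).
        pose proof (hsym a b). pose proof (hsym a UB). pose proof (hsym a LO). lra.
      * pose proof (M1 b LO a ltac:(lra)). pose proof (M1 LO UB a ltac:(lra)).
        pose proof (hnn LO UB). pose proof (hnn b LO).
        pose proof (hsym a b). pose proof (hsym a UB). lra.
    + pose proof (M1 b UB a ltac:(lra)). pose proof (hnn b UB).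
      pose proof (hsym a b). pose proof (hsym a UB). lra.
  - destruct (Rlt_dec a LB) as [hB|hB].
    + intros ->. pose proof (hnn a LB).
      destruct (Rlt_dec UO b) as [hU|hU].
      * destruct (Rlt_dec UA UO) as [hUA|hUA].
        -- pose proof (H1 a b UA UO ltac:(lra) ltac:(lra)).
           pose proof (M1 a LB UO ltac:(lra)). pose proof (M1 UA UO b ltac:(lra)).
           pose proof (hnn LB UO). pose proof (hnn UO b).
           pose proof (hsym b UA). pose proof (hsym UO UA). lra.
        -- pose proof (M1 a UO b ltac:(lra)). pose proof (M1 a LB UO ltac:(lra)).
           pose proof (hnn LB UO). pose proof (hnn UO b).
           pose proof (hsym b UO). lra.
      * destruct (Rlt_dec b LO) as [hL|hL]; [lra|].
        pose proof (M1 a LB b ltac:(lra)). pose proof (hnn LB b). lra.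
    + intros ->.
      destruct (Rlt_dec UO b) as [hU|hU].
      * destruct (Rlt_dec UA UO) as [hUA|hUA].
        -- pose proof (H1 a b UA UO ltac:(lra) ltac:(lra)).
           pose proof (M1 UA UO b ltac:(lra)).
           pose proof (hnn a UO). pose proof (hnn UO b).
           pose proof (hsym b UA). pose proof (hsym UO UA). lra.
        -- pose proof (M1 a UO b ltac:(lra)). pose proof (hnn a UO). pose proof (hnn UO b).
           pose proof (hsym b UO). lra.
      * destruct (Rlt_dec b LO) as [hL|hL].
        -- destruct (Rlt_dec LO LA) as [hLA|hLA].
           ++ pose proof (H1 b a LO LA ltac:(lra) ltac:(lra)).
              pose proof (M1 b LO LA ltac:(lra)). pose proof (hnn a LO). pose proof (hnn b LO).
              pose proof (hsym a b). lra.
           ++ pose proof (M1 b LO a ltac:(lra)). pose proof (hnn b LO). pose proof (hnn LO a).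
              pose proof (hsym a b). lra.
        -- pose proof (hnn a b). lra.
Qed.

Lemma cell_kb l w (A B : nat -> R) (delta : R -> R -> R)
  (hnn : forall a b, 0 <= delta a b)
  (hsym : forall a b, delta a b = delta b a)
  (hzero : forall a, delta a a = 0)
  (htri : forall a b x y, (a <= x /\ x <= y /\ y <= b) \/ (a >= x /\ x >= y /\ y >= b) ->
            delta a b >= delta a y + delta b x - delta x y) i j :
  (1 <= i <= l)%nat -> (1 <= j <= l)%nat -> (j <= i + w)%nat -> (i <= j + w)%nat ->
  0 <= kappa l w delta A B i /\ 0 <= beta l w delta A B j /\
  kappa l w delta A B i + beta l w delta A B j <= delta (A i) (B j).
Proof.
  intros Hi Hj H1 H2.
  assert (Wi := in_win l w i j Hj H1 H2).
  assert (Wj := in_win l w j i Hi H2 H1).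
  exact (cell_abs delta hnn hsym hzero htri (A i) (B j) (upper_env l w B i) (lower_env l w B i)
    (upper_env l w A j) (lower_env l w A j) (proj_seq l w A B i)
    (upper_env l w (proj_seq l w A B) j) (lower_env l w (proj_seq l w A B) j)
    (upper_ge l w B i j Wi) (lower_le l w B i j Wi) (upper_ge l w A j i Wj) (lower_le l w A j i Wj)
    (upper_ge l w _ j i Wj) (lower_le l w _ j i Wj) eq_refl).
Qed.

Definition cS (q : nat*nat) : bool := andb (fst q <=? 3)%nat (snd q <=? 3)%nat.
Definition cE (l : nat) (q : nat*nat) : bool := andb (l - 2 <=? fst q)%nat (l - 2 <=? snd q)%nat.

Lemma start_gen (D : nat -> nat -> R) (Dnn : forall i j, 0 <= D i j) q1 q2 q3 :
  step (1%nat,1%nat) q1 -> step q1 q2 -> step q2 q3 ->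
  Rmin (D 1%nat 2%nat + D 1%nat 3%nat) (Rmin (D 1%nat 2%nat + D 2%nat 3%nat) (Rmin (D 2%nat 2%nat + D 2%nat 3%nat)
      (Rmin (D 2%nat 2%nat + D 3%nat 3%nat) (Rmin (D 2%nat 2%nat + D 3%nat 2%nat)
      (Rmin (D 2%nat 1%nat + D 3%nat 2%nat) (D 2%nat 1%nat + D 3%nat 1%nat)))))) <=
  (if cS q1 then D (fst q1) (snd q1) else 0) + (if cS q2 then D (fst q2) (snd q2) else 0)
  + (if cS q3 then D (fst q3) (snd q3) else 0).
Proof.
  set (m := Rmin _ _).
  assert (m1 : m <= D 1%nat 2%nat + D 1%nat 3%nat) by (unfold m; apply Rmin_l).
  assert (m2 : m <= D 1%nat 2%nat + D 2%nat 3%nat) by (unfold m; eapply Rle_trans; [apply Rmin_r|]; apply Rmin_l).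
  assert (m3 : m <= D 2%nat 2%nat + D 2%nat 3%nat) by (unfold m; do 2 (eapply Rle_trans; [apply Rmin_r|]); apply Rmin_l).
  assert (m4 : m <= D 2%nat 2%nat + D 3%nat 3%nat) by (unfold m; do 3 (eapply Rle_trans; [apply Rmin_r|]); apply Rmin_l).
  assert (m5 : m <= D 2%nat 2%nat + D 3%nat 2%nat) by (unfold m; do 4 (eapply Rle_trans; [apply Rmin_r|]); apply Rmin_l).
  assert (m6 : m <= D 2%nat 1%nat + D 3%nat 2%nat) by (unfold m; do 5 (eapply Rle_trans; [apply Rmin_r|]); apply Rmin_l).
  assert (m7 : m <= D 2%nat 1%nat + D 3%nat 1%nat) by (unfold m; do 5 (eapply Rle_trans; [apply Rmin_r|]); apply Rmin_r).
  clearbody m.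
  destruct q1 as [x1 y1], q2 as [x2 y2], q3 as [x3 y3].
  pose proof (Dnn x1 y1). pose proof (Dnn x2 y2). pose proof (Dnn x3 y3).
  unfold step; simpl.
  intros [[? ?]|[[? ?]|[? ?]]]; subst;
  intros [[? ?]|[[? ?]|[? ?]]]; subst;
  intros [[? ?]|[[? ?]|[? ?]]]; subst; unfold cS; simpl; lra.
Qed.

Definition rf (l : nat) (q : nat*nat) : nat*nat := ((l + 1) - fst q, (l + 1) - snd q)%nat.

Lemma step_rf l p q : step p q -> (fst q <= l)%nat -> (snd q <= l)%nat -> step (rf l q) (rf l p).
Proof. destruct p as [a b], q as [c d]. unfold step, rf; simpl. lia. Qed.

Lemma rf_term l (delta : R -> R -> R) (A B : nat -> R) q :
  (3 <= l)%nat -> (fst q <= l)%nat -> (snd q <= l)%nat ->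
  (if cS (rf l q) then (fun i j => delta (A (l+1-i)%nat) (B (l+1-j)%nat)) (fst (rf l q)) (snd (rf l q)) else 0)
  = (if cE l q then delta (A (fst q)) (B (snd q)) else 0).
Proof.
  destruct q as [x y]; unfold cS, cE, rf; simpl. intros.
  replace (l + 1 - (l + 1 - x))%nat with x by lia.
  replace (l + 1 - (l + 1 - y))%nat with y by lia.
  replace (l + 1 - x <=? 3)%nat with (l - 2 <=? x)%nat.
  replace (l + 1 - y <=? 3)%nat with (l - 2 <=? y)%nat. reflexivity.
  all: apply Bool.eq_iff_eq_true; rewrite !Nat.leb_le; lia.
Qed.

Definition kp l w delta A B i := if (andb (4 <=? i)%nat (i <=? l - 3)%nat) then kappa l w delta A B i else 0.
Definition bp l w delta A B j := if (andb (4 <=? j)%nat (j <=? l - 3)%nat) then beta l w delta A B j else 0.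

Lemma kp_out l w delta A B i : (i < 4 \/ l - 3 < i)%nat -> kp l w delta A B i = 0.
Proof. intros H. unfold kp. replace (andb (4 <=? i)%nat (i <=? l - 3)%nat) with false. auto.
  symmetry. apply Bool.andb_false_iff. destruct H; [left|right]; apply Nat.leb_gt; lia. Qed.
Lemma bp_out l w delta A B i : (i < 4 \/ l - 3 < i)%nat -> bp l w delta A B i = 0.
Proof. intros H. unfold bp. replace (andb (4 <=? i)%nat (i <=? l - 3)%nat) with false. auto.
  symmetry. apply Bool.andb_false_iff. destruct H; [left|right]; apply Nat.leb_gt; lia. Qed.

Lemma kp_sum l w delta A B : (6 <= l)%nat ->
  Sm (S l) (kp l w delta A B) = sum_range 4 (l - 3) (kappa l w delta A B).
Proof.
  intros Hl. unfold sum_range. rewrite fold_seq.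
  replace (S l) with (4 + ((l - 6) + 3))%nat by lia. rewrite !Sm_split.
  replace (S (l - 3) - 4)%nat with (l - 6)%nat by lia.
  rewrite (Sm_zero 4). rewrite (Sm_zero 3). 
  rewrite (Sm_ext _ _ (fun k => kappa l w delta A B (4 + k)%nat)). lra.
  - intros k Hk. unfold kp. replace (andb (4 <=? 4 + k)%nat (4 + k <=? l - 3)%nat) with true. auto.
    symmetry. apply andb_true_intro; split; apply Nat.leb_le; lia.
  - intros k Hk. apply kp_out. lia.
  - intros k Hk. apply kp_out. lia.
Qed.
Lemma bp_sum l w delta A B : (6 <= l)%nat ->
  Sm (S l) (bp l w delta A B) = sum_range 4 (l - 3) (beta l w delta A B).
Proof.
  intros Hl. unfold sum_range. rewrite fold_seq.
  replace (S l) with (4 + ((l - 6) + 3))%nat by lia. rewrite !Sm_split.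
  replace (S (l - 3) - 4)%nat with (l - 6)%nat by lia.
  rewrite (Sm_zero 4). rewrite (Sm_zero 3). 
  rewrite (Sm_ext _ _ (fun k => beta l w delta A B (4 + k)%nat)). lra.
  - intros k Hk. unfold bp. replace (andb (4 <=? 4 + k)%nat (4 + k <=? l - 3)%nat) with true. auto.
    symmetry. apply andb_true_intro; split; apply Nat.leb_le; lia.
  - intros k Hk. apply bp_out. lia.
  - intros k Hk. apply bp_out. lia.
Qed.

Definition newc (g : nat -> nat) (k : nat) : bool :=
  match k with O => true | S k' => negb (Nat.eqb (g k') (g (S k'))) end.

Lemma tele (g : nat -> nat) (f : nat -> R) n :
  (forall k, (S k < n)%nat -> g (S k) = g k \/ g (S k) = S (g k)) ->
  forall m, (1 <= m <= n)%nat ->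
  Sm m (fun k => if newc g k then f (g k) else 0) = Sm (S (g (m-1)%nat)) f - Sm (S (g O)) f + f (g O).
Proof.
  intros Hg m Hm. induction m as [|m IH]. lia.
  destruct m as [|m].
  - simpl. lra.
  - rewrite Sm_S, IH by lia. replace (S (S m) - 1)%nat with (S m) by lia.
    replace (S m - 1)%nat with m by lia.
    simpl newc. destruct (Hg m ltac:(lia)) as [E|E]; rewrite E.
    + rewrite Nat.eqb_refl. simpl negb. lra.
    + replace (g m =? S (g m))%nat with false by (symmetry; apply Nat.eqb_neq; lia).
      simpl negb. rewrite (Sm_S (S (g m))). lra.
Qed.

Lemma hb_bound (b : bool) x : 0 <= x -> 0 <= (if b then x else 0) <= x.
Proof. destruct b; lra. Qed.

Lemma main_bound (l w : nat) (A B : nat -> R) (delta : R -> R -> R)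
  (hl : (6 <= l)%nat)
  (hnn : forall a b, 0 <= delta a b)
  (hsym : forall a b, delta a b = delta b a)
  (hzero : forall a, delta a a = 0)
  (htri : forall a b x y, (a <= x /\ x <= y /\ y <= b) \/ (a >= x /\ x >= y /\ y >= b) ->
            delta a b >= delta a y + delta b x - delta x y) P :
  warping_path l P -> in_window w P -> LB_Petitjean l w delta A B <= path_cost delta A B P.
Proof.
  intros HP HW.
  destruct P as [|p P']; [contradiction|]. destruct HP as [Hp0 [Hlast Hch]].
  set (L := p :: P') in *.
  set (n := length L).
  set (c := fun k => nth k L (0%nat,0%nat)).
  assert (Hc0 : c 0%nat = (1%nat,1%nat)) by (unfold c; simpl; auto).
  assert (Hcn : c (n-1)%nat = (l,l)).
  { unfold c, n, L. simpl length. replace (S (length P') - 1)%nat with (length P') by lia.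
    rewrite <- (last_nth P' p p). exact Hlast. }
  assert (Hstep : forall k, (S k < n)%nat -> step (c k) (c (S k))).
  { intros k Hk. apply chain_nth; auto. }
  assert (Hwin : forall k, (k < n)%nat -> (fst (c k) <= snd (c k) + w /\ snd (c k) <= fst (c k) + w)%nat).
  { intros k Hk. unfold in_window in HW. rewrite Forall_forall in HW. apply HW. apply nth_In. auto. }
  assert (Hmono : forall k k', (k <= k' < n)%nat -> (fst (c k) <= fst (c k') /\ snd (c k) <= snd (c k'))%nat).
  { intros k k' [H1 H2]. induction k' as [|k' IH].
    - replace k with 0%nat by lia. lia.
    - destruct (Nat.eq_dec k (S k')) as [->|Hne]. lia.
      specialize (IH ltac:(lia) ltac:(lia)). pose proof (Hstep k' H2) as Hs. unfold step in Hs. lia. }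
  assert (Hgrow : forall k, (k < n)%nat -> (fst (c k) <= S k)%nat).
  { induction k as [|k IH]; intros Hk. rewrite Hc0. simpl. lia.
    pose proof (Hstep k Hk) as Hs. unfold step in Hs. specialize (IH ltac:(lia)). lia. }
  assert (Hn1 : (1 <= n)%nat) by (unfold n, L; simpl; lia).
  assert (Hn : (l <= n)%nat).
  { pose proof (Hgrow (n-1)%nat ltac:(lia)). rewrite Hcn in H. cbn [fst] in H. lia. }
  assert (Hrange : forall k, (k < n)%nat -> (1 <= fst (c k) <= l /\ 1 <= snd (c k) <= l)%nat).
  { intros k Hk. pose proof (Hmono 0%nat k ltac:(lia)). pose proof (Hmono k (n-1)%nat ltac:(lia)).
    rewrite Hc0 in H. rewrite Hcn in H0. simpl in *. lia. }
  unfold path_cost. rewrite cost_Sm. fold L. fold n.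
  set (cost := fun k => delta (A (fst (c k))) (B (snd (c k)))).
  change (LB_Petitjean l w delta A B <= Sm n cost).
  set (Fs := fun k => if cS (c k) then cost k else 0).
  set (Fe := fun k => if cE l (c k) then cost k else 0).
  set (hr := fun k => if newc (fun k => fst (c k)) k then kp l w delta A B (fst (c k)) else 0).
  set (hc := fun k => if newc (fun k => snd (c k)) k then bp l w delta A B (snd (c k)) else 0).
  assert (Hpt : forall k, (k < n)%nat -> Fs k + Fe k + hr k + hc k <= cost k).
  { intros k Hk. destruct (Hrange k Hk) as [Ri Rj]. destruct (Hwin k Hk) as [W1 W2].
    destruct (cell_kb l w A B delta hnn hsym hzero htri (fst (c k)) (snd (c k)) Ri Rj W2 W1) as [K1 [K2 K3]].
    fold (cost k) in K3.
    assert (P1 : 0 <= kp l w delta A B (fst (c k)) <= kappa l w delta A B (fst (c k))).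
    { unfold kp. destruct (andb _ _); lra. }
    assert (P2 : 0 <= bp l w delta A B (snd (c k)) <= beta l w delta A B (snd (c k))).
    { unfold bp. destruct (andb _ _); lra. }
    assert (P3 := hb_bound (newc (fun k => fst (c k)) k) _ (proj1 P1)).
    assert (P4 := hb_bound (newc (fun k => snd (c k)) k) _ (proj1 P2)).
    fold (hr k) in P3. fold (hc k) in P4.
    unfold Fs, Fe. destruct (cS (c k)) eqn:ES; destruct (cE l (c k)) eqn:EE.
    - unfold cS, cE in *. apply Bool.andb_true_iff in ES, EE. rewrite !Nat.leb_le in ES, EE. lia.
    - unfold cS in ES. apply Bool.andb_true_iff in ES. rewrite !Nat.leb_le in ES.
      rewrite kp_out in P3 by lia. rewrite bp_out in P4 by lia. lra.
    - unfold cE in EE. apply Bool.andb_true_iff in EE. rewrite !Nat.leb_le in EE.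
      rewrite kp_out in P3 by lia. rewrite bp_out in P4 by lia. lra.
    - lra. }
  assert (Hsum : Sm n Fs + Sm n Fe + Sm n hr + Sm n hc <= Sm n cost).
  { rewrite <- !Sm_plus. apply Sm_le. exact Hpt. }
  assert (Fsnn : forall k, 0 <= Fs k) by (intros k; unfold Fs; destruct (cS _); [apply hnn|lra]).
  assert (Fenn : forall k, 0 <= Fe k) by (intros k; unfold Fe; destruct (cE _ _); [apply hnn|lra]).
  assert (Hr : Sm n hr = sum_range 4 (l - 3) (kappa l w delta A B)).
  { unfold hr. rewrite (tele (fun k => fst (c k)) (kp l w delta A B) n) by
      (try lia; intros k Hk; pose proof (Hstep k Hk) as Hs; unfold step in Hs; lia).
    rewrite Hcn, Hc0. simpl fst. rewrite <- kp_sum by lia.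
    rewrite (kp_out l w delta A B 1) by lia. simpl Sm. rewrite (kp_out l w delta A B 0) by lia.
    rewrite (kp_out l w delta A B 1) by lia. lra. }
  assert (Hc : Sm n hc = sum_range 4 (l - 3) (beta l w delta A B)).
  { unfold hc. rewrite (tele (fun k => snd (c k)) (bp l w delta A B) n) by
      (try lia; intros k Hk; pose proof (Hstep k Hk) as Hs; unfold step in Hs; lia).
    rewrite Hcn, Hc0. simpl snd. rewrite <- bp_sum by lia.
    rewrite (bp_out l w delta A B 1) by lia. simpl Sm. rewrite (bp_out l w delta A B 0) by lia.
    rewrite (bp_out l w delta A B 1) by lia. lra. }
  assert (Hs4 := Sm4_head n Fs ltac:(lia) Fsnn).
  assert (Hst := start_gen (fun i j => delta (A i) (B j)) (fun i j => hnn _ _) (c 1%nat) (c 2%nat) (c 3%nat)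
     ltac:(rewrite <- Hc0; apply Hstep; lia) ltac:(apply Hstep; lia) ltac:(apply Hstep; lia)).
  cbv beta in Hst.
  assert (F0 : Fs 0%nat = delta (A 1%nat) (B 1%nat)) by (unfold Fs, cost; rewrite Hc0; reflexivity).
  change (if cS (c 1%nat) then delta (A (fst (c 1%nat))) (B (snd (c 1%nat))) else 0) with (Fs 1%nat) in Hst.
  change (if cS (c 2%nat) then delta (A (fst (c 2%nat))) (B (snd (c 2%nat))) else 0) with (Fs 2%nat) in Hst.
  change (if cS (c 3%nat) then delta (A (fst (c 3%nat))) (B (snd (c 3%nat))) else 0) with (Fs 3%nat) in Hst.
  assert (He4 := Sm4_tail n Fe ltac:(lia) Fenn).
  assert (Hen := start_gen (fun i j => delta (A (l+1-i)%nat) (B (l+1-j)%nat)) (fun i j => hnn _ _)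
     (rf l (c (n-2)%nat)) (rf l (c (n-3)%nat)) (rf l (c (n-4)%nat))).
  assert (Q1 : step (1%nat,1%nat) (rf l (c (n-2)%nat))).
  { replace (1%nat,1%nat) with (rf l (l,l)) by (unfold rf; simpl; f_equal; lia).
    rewrite <- Hcn. apply step_rf. replace (n-1)%nat with (S (n-2)) by lia. apply Hstep; lia.
    all: rewrite Hcn; simpl; lia. }
  assert (Q2 : step (rf l (c (n-2)%nat)) (rf l (c (n-3)%nat))).
  { apply step_rf. replace (n-2)%nat with (S (n-3)) by lia. apply Hstep; lia.
    all: apply Hrange; lia. }
  assert (Q3 : step (rf l (c (n-3)%nat)) (rf l (c (n-4)%nat))).
  { apply step_rf. replace (n-3)%nat with (S (n-4)) by lia. apply Hstep; lia.
    all: apply Hrange; lia. }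
  specialize (Hen Q1 Q2 Q3).
  cbv beta in Hen.
  rewrite !rf_term in Hen by (try lia; apply Hrange; lia).
  change (if cE l (c (n-2)%nat) then delta (A (fst (c (n-2)%nat))) (B (snd (c (n-2)%nat))) else 0) with (Fe (n-2)%nat) in Hen.
  change (if cE l (c (n-3)%nat) then delta (A (fst (c (n-3)%nat))) (B (snd (c (n-3)%nat))) else 0) with (Fe (n-3)%nat) in Hen.
  change (if cE l (c (n-4)%nat) then delta (A (fst (c (n-4)%nat))) (B (snd (c (n-4)%nat))) else 0) with (Fe (n-4)%nat) in Hen.
  cbv beta in Hen.
  replace (l + 1 - 1)%nat with l in Hen by lia.
  replace (l + 1 - 2)%nat with (l - 1)%nat in Hen by lia.
  replace (l + 1 - 3)%nat with (l - 2)%nat in Hen by lia.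
  assert (Fn : Fe (n-1)%nat = delta (A l) (B l)).
  { unfold Fe, cost. rewrite Hcn. unfold cE. simpl.
    replace (andb (l - 2 <=? l)%nat (l - 2 <=? l)%nat) with true. reflexivity.
    symmetry; apply andb_true_intro; split; apply Nat.leb_le; lia. }
  unfold LB_Petitjean, minlrpaths, dcost.
  rewrite <- Hr, <- Hc. lra.
Qed.

Theorem theorem1 (l w : nat) (A B : nat -> R) (delta : R -> R -> R)
  (hl : (6 <= l)%nat)
  (hnn : forall a b, 0 <= delta a b)
  (hsym : forall a b, delta a b = delta b a)
  (hzero : forall a, delta a a = 0)
  (htri : forall a b x y, (a <= x /\ x <= y /\ y <= b) \/ (a >= x /\ x >= y /\ y >= b) ->
            delta a b >= delta a y + delta b x - delta x y) :
  Rbar_le (Finite (LB_Petitjean l w delta A B)) (DTW l w delta A B).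
Proof.
  unfold DTW. destruct (Glb_Rbar_correct (fun c => exists P, warping_path l P /\ in_window w P /\
                               c = path_cost delta A B P)) as [_ H].
  apply H. intros x [P [HP [HW ->]]]. simpl. apply main_bound; auto.
Qed.
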